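(* Let $X=\mathbb{CP}^2\#n\overline{\mathbb{CP}}^2$, $k$ a positive integer and $U_5=\{A\in H_2(X;\mathbb{Z}):\mathrm{ind}(A)\ge2k,\ A\cdot H>0\}$, equipped with the preorder $\ge$ defined below. Then every chain $A_1\ge A_2\ge\cdots$ in $U_5$ stabilizes, i.e. there is $N$ with $A_i=A_N$ for all $i\ge N$.
   Context: $K_0=-3H+E_1+\cdots+E_n$, $\mathrm{ind}(A):=A^2-K_0\cdot A$. Identify $H^2(X;\mathbb{R})$ with $\mathbb{R}^{n+1}$ by $(x_0,\dots,x_n)\leftrightarrow x_0PD(H)-\sum x_iPD(E_i)$. The reduced cone $\mathcal{P}$ is: $0<x_1<x_0$ if $n=1$; $0<x_2\le x_1$, $x_1+x_2<x_0$ if $n=2$; $0<x_n\le\cdots\le x_1$, $x_1+x_2+x_3\le x_0$, $\sum x_i^2<x_0^2$ if $n\ge3$. The $c_1$-nef cone is $\mathcal{P}^{c_1>0}=\{[\omega]\in\mathcal{P}:\omega(3H-E_1-\cdots-E_n)>0\}$. For $A,B\in U_5$, $A\ge B$ means $\omega(A)\ge\omega(B)$ for all $[\omega]\in\mathcal{P}^{c_1>0}$. *)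

(* Defs.v *)
From HB Require Import structures.
From mathcomp Require Import all_boot all_order all_algebra.
From mathcomp Require Import reals.
Set Implicit Arguments. Unset Strict Implicit. Unset Printing Implicit Defensive.
Import Order.TTheory GRing.Theory Num.Theory.
Local Open Scope ring_scope.

(* X = CP^2 # n \bar{CP^2}.  A class A = a H - sum_i b_i E_i in H_2(X;Z)
   is encoded by the pair (a, b) with b : {ffun 'I_n -> int}
   (index i : 'I_n corresponds to E_{i+1}). *)
Definition cls (n : nat) := (int * {ffun 'I_n -> int})%type.

(* intersection form: H.H = 1, E_i.E_i = -1, H.E_i = 0 *)
Definition dot n (A B : cls n) : int :=
  A.1 * B.1 - \sum_(i < n) A.2 i * B.2 i.

Definition clsH n : cls n := (1, [ffun _ => 0]).
(* K_0 = -3H + E_1 + ... + E_n = -3 H - sum (-1) E_i *)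
Definition K0 n : cls n := (-3, [ffun _ => -1]).

Definition ind n (A : cls n) : int := dot A A - dot (K0 n) A.

Definition U5 n (k : nat) (A : cls n) : Prop :=
  ((2 * k)%:Z <= ind A) /\ (0 < dot A (clsH n)).

(* A cohomology class x0 PD(H) - sum x_i PD(E_i) is (x0, x), x : 'I_n -> R. *)
Definition reduced_cone (R : realType) n (x0 : R) (x : 'I_n -> R) : Prop :=
  if n == 1%N then (forall i, 0 < x i) /\ (forall i, x i < x0)
  else if n == 2%N then
    (forall i, 0 < x i) /\ (forall i j : 'I_n, (i <= j)%N -> x j <= x i) /\
    \sum_(i < n) x i < x0
  else
    (forall i, 0 < x i) /\ (forall i j : 'I_n, (i <= j)%N -> x j <= x i) /\
    \sum_(i < n | (i < 3)%N) x i <= x0 /\ \sum_(i < n) x i ^+ 2 < x0 ^+ 2.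

Definition omega_eval (R : realType) n (x0 : R) (x : 'I_n -> R) (A : cls n) : R :=
  x0 * A.1%:~R - \sum_(i < n) x i * (A.2 i)%:~R.

Definition c1_nef_cone (R : realType) n (x0 : R) (x : 'I_n -> R) : Prop :=
  reduced_cone x0 x /\ 0 < omega_eval x0 x (3, [ffun _ => 1]).

Definition cls_ge (R : realType) n (A B : cls n) : Prop :=
  forall (x0 : R) (x : 'I_n -> R), c1_nef_cone x0 x ->
    omega_eval x0 x B <= omega_eval x0 x A.

(* Main.v *)
Require Import Defs.
From HB Require Import structures.
From mathcomp Require Import all_boot all_order all_algebra.
From mathcomp Require Import reals.

From mathcomp Require Import zify ring lra.
From Stdlib Require Import Classical.
Import Order.TTheory GRing.Theory Num.Theory.
Set Implicit Arguments. Unset Strict Implicit. Unset Printing Implicit Defensive.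
Local Open Scope ring_scope.
Lemma nonincr_nat (u : nat -> nat) : (forall i, u i.+1 <= u i)%N ->
  forall i j, (i <= j)%N -> (u j <= u i)%N.
Proof.
move=> hu i j /subnKC <-; elim: (j - i)%N => [|d IH]; first by rewrite addn0.
by rewrite addnS; apply: leq_trans (hu _) IH.
Qed.

Lemma stab_nat (u : nat -> nat) : (forall i, u i.+1 <= u i)%N ->
  exists N, forall i, (N <= i)%N -> u i = u N.
Proof.
move=> hu; suff: forall m (w : nat -> nat), (forall i, w i.+1 <= w i)%N -> (w 0 <= m)%N ->
  exists N, forall i, (N <= i)%N -> w i = w N by move/(_ (u 0%N) u hu (leqnn _)).
elim=> [|m IH] w hw.
  rewrite leqn0 => /eqP h0; exists 0%N => i _; rewrite h0.
  by have := @nonincr_nat w hw 0%N i (leq0n i); rewrite h0 leqn0 => /eqP.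
move=> hm; case: (classic (exists i, (w i < w 0)%N)) => [[i hi]|hno].
  have h1 : forall k, (w (i + k.+1) <= w (i + k))%N by move=> k; rewrite addnS; apply: hw.
  have h2 : (w (i + 0) <= m)%N by rewrite addn0; move: hi hm; lia.
  have [N' HN] := IH (fun k => w (i + k)%N) h1 h2.
  exists (i + N')%N => j hj.
  have := HN (j - i)%N; rewrite subnKC; last by lia.
  by apply; lia.
exists 0%N => i _; apply/eqP; rewrite eqn_leq (@nonincr_nat w hw 0%N i) //=.
by rewrite leqNgt; apply/negP => h; apply: hno; exists i.
Qed.

Lemma stab_int (v : nat -> int) : (forall i, v i.+1 <= v i) -> (forall i, 0 <= v i) ->
  exists N, forall i, (N <= i)%N -> v i = v N.
Proof.
move=> hv h0; have [|N HN] := @stab_nat (fun i => `|v i|%N).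
  by move=> i; have := hv i; have := h0 i; have := h0 i.+1; lia.
exists N => i hi; have := HN i hi; have := h0 i; have := h0 N; lia.
Qed.
Lemma ind_expand n (A : cls n) :
  ind A = A.1 * A.1 + 3 * A.1 - \sum_(i < n) (A.2 i * A.2 i + A.2 i).
Proof.
rewrite /ind /dot /K0 /= big_split /=.
rewrite (eq_bigr (fun i => - A.2 i) (F1 := fun i : 'I_n => [ffun=> -1] i * A.2 i)); last by move=> i _; rewrite ffunE mulN1r.
rewrite sumrN; ring.
Qed.

Lemma U5_bound n k (A : cls n) : U5 k A -> 0 < A.1 /\ forall j, A.2 j <= A.1 + 1.
Proof.
case=> hi hd; split.
  by move: hd; rewrite /dot /clsH /=; under eq_bigr do rewrite ffunE mulr0; rewrite big1 // subr0 mulr1.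
move=> j; have h0 : 0 <= ind A by apply: le_trans hi.
have hb : A.2 j * A.2 j + A.2 j <= \sum_(i < n) (A.2 i * A.2 i + A.2 i).
  rewrite (bigD1 j) //= lerDl sumr_ge0 // => i _; nia.
move: h0; rewrite ind_expand => h0.
have hd' : 0 < A.1.
  by move: hd; rewrite /dot /clsH /=; under eq_bigr do rewrite ffunE mulr0; rewrite big1 // subr0 mulr1.
nia.
Qed.

Definition vv n (A : cls n) : int :=
  (8 * n * n)%N%:Z * A.1 - \sum_(i < n) (2 * n - i)%N%:Z * A.2 i.

Lemma vv_ge0 n k (A : cls n) : U5 k A -> 0 <= vv A.
Proof.
move=> /U5_bound [ha hb]; rewrite /vv.
have : \sum_(i < n) (2 * n - i)%N%:Z * A.2 i <= \sum_(i < n) ((2 * n)%N%:Z * (A.1 + 1)).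
  apply: ler_sum => i _; have := hb i; have := ltn_ord i; nia.
rewrite sumr_const card_ord -mulr_natr; nia.
Qed.
Lemma omega_pert (R : realType) n (x0 t : R) (x e : 'I_n -> R) (A : cls n) :
  omega_eval (x0 + t) (fun i => x i + e i) A =
  omega_eval x0 x A + t * (A.1)%:~R - \sum_(i < n) e i * (A.2 i)%:~R.
Proof.
rewrite /omega_eval.
under eq_bigr do rewrite mulrDl.
rewrite big_split /=; ring.
Qed.

Lemma omega_vv (R : realType) n (A : cls n) :
  omega_eval ((8 * n * n)%N%:R : R) (fun i : 'I_n => (2 * n - i)%N%:R) A = (vv A)%:~R.
Proof.
rewrite /omega_eval /vv rmorphB /= rmorph_sum /= intrM.
by congr (_ - _); apply: eq_bigr => i _; rewrite intrM.
Qed.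

Lemma sum_single n (j : 'I_n) (R : realType) (s : R) (b : 'I_n -> R) :
  \sum_(i < n) (if i == j then s else 0) * b i = s * b j.
Proof.
rewrite (bigD1 j) //= eqxx big1 ?addr0 // => i /negbTE ->; by rewrite mul0r.
Qed.
Lemma cone_pert (R : realType) n (hn : (0 < n)%N) (t : R) (e : 'I_n -> R) :
  -(1/2) <= t -> t <= 1/2 -> (forall i, -(1/2) <= e i) -> (forall i, e i <= 1/2) ->
  c1_nef_cone ((8 * n * n)%N%:R + t) (fun i : 'I_n => (2 * n - i)%N%:R + e i).
Proof.
move=> ht1 ht2 he1 he2.
set N : R := n%:R.
have hN : 1 <= N by rewrite /N ler1n.
have mN : forall y : R, y *+ n = y * N by move=> y; rewrite mulr_natr.
have hNN : N <= N * N by nra.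
have hx0 : (8 * n * n)%N%:R = 8 * N * N :> R by rewrite !natrM.
have ylo : forall i : 'I_n, 1 <= (2 * n - i)%N%:R :> R.
  by move=> i; rewrite ler1n; have := ltn_ord i; lia.
have yhi : forall i : 'I_n, (2 * n - i)%N%:R <= 2 * N :> R.
  move=> i; apply: (@le_trans _ _ ((2 * n)%N%:R)); last by rewrite natrM.
  by rewrite ler_nat leq_subr.
set x := fun i : 'I_n => _.
have xpos : forall i, 0 < x i by move=> i; rewrite /x; have := ylo i; have := he1 i; lra.
have xhi : forall i, x i <= 2 * N + 1/2 by move=> i; rewrite /x; have := yhi i; have := he2 i; lra.
have xord : forall i j : 'I_n, (i <= j)%N -> x j <= x i.
  move=> i j; rewrite leq_eqVlt => /orP [/eqP/val_inj -> //| hij].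
  have : ((2 * n - j).+1 <= 2 * n - i)%N by have := ltn_ord j; lia.
  rewrite -(ler_nat R) -natr1 /x => h; have := he1 i; have := he2 j; lra.
have sle : \sum_(i < n) x i <= (2 * N + 1/2) * N.
  apply: (@le_trans _ _ (\sum_(i < n) (2 * N + 1/2))); first by apply: ler_sum => i _; apply: xhi.
  by rewrite sumr_const card_ord mN.
have sqle : \sum_(i < n) x i ^+ 2 <= (2 * N + 1/2) ^+ 2 * N.
  apply: (@le_trans _ _ (\sum_(i < n) (2 * N + 1/2) ^+ 2)).
    apply: ler_sum => i _; have := xhi i; have := xpos i; rewrite !expr2; nra.
  by rewrite sumr_const card_ord mN.
have s3 : \sum_(i < n | (i < 3)%N) x i <= \sum_(i < n) x i.
  rewrite [X in _ <= X](bigID (fun i : 'I_n => (i < 3)%N)) /= lerDl.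
  by apply: sumr_ge0 => i _; apply: ltW.
split.
  rewrite /reduced_cone hx0; case: ifP => _.
    by split => i; [apply: xpos | have := xhi i; lra].
  case: ifP => _.
    by do !split => //; lra.
  by do !split => //; [lra| rewrite !expr2 in sqle *; nra].
rewrite /omega_eval /= hx0.
under eq_bigr do rewrite ffunE mulr1.
lra.
Qed.

Theorem lemma4p3 (R : realType) (n : nat) (hn : (0 < n)%N) (k : nat) (hk : (0 < k)%N)
  (A : nat -> cls n) :
  (forall i, U5 k (A i)) ->
  (forall i, cls_ge R (A i) (A i.+1)) ->
  exists N : nat, forall i, (N <= i)%N -> A i = A N.
Proof.
move=> hU hge.
have key : forall i (t : R) (e : 'I_n -> R),
    -(1/2) <= t -> t <= 1/2 -> (forall j, -(1/2) <= e j) -> (forall j, e j <= 1/2) ->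
    (vv (A i.+1))%:~R + t * ((A i.+1).1)%:~R - \sum_(j < n) e j * ((A i.+1).2 j)%:~R <=
    (vv (A i))%:~R + t * ((A i).1)%:~R - \sum_(j < n) e j * ((A i).2 j)%:~R.
  move=> i t e h1 h2 h3 h4.
  have := hge i _ _ (cone_pert hn h1 h2 h3 h4).
  by rewrite !omega_pert !omega_vv.
have s0 : forall (B : cls n), \sum_(j < n) (0:R) * ((B.2 j)%:~R) = 0.
  by move=> B; rewrite big1 // => j _; rewrite mul0r.
have z1 : -(1/2) <= (0 : R) by lra.
have z2 : (0 : R) <= 1/2 by lra.
have p1 : -(1/2) <= (1/2 : R) by lra.
have p2 : -(1/2) <= (-(1/2) : R) by lra.
have p3 : (-(1/2) : R) <= 1/2 by lra.
have vdec : forall i, vv (A i.+1) <= vv (A i).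
  move=> i; have := key i 0 (fun _ => 0) z1 z2 (fun _ => z1) (fun _ => z2).
  by rewrite !s0 !mul0r !oppr0 !addr0 ler_int.
have [N HN] := stab_int vdec (fun i => vv_ge0 (hU i)).
have step : forall i, (N <= i)%N -> A i.+1 = A i.
  move=> i hi.
  have ev : (vv (A i.+1))%:~R = (vv (A i))%:~R :> R by rewrite (HN i.+1 (leqW hi)) (HN i hi).
  have ha : (A i.+1).1 = (A i).1.
    have := key i (1/2) (fun _ => 0) p1 (lexx _) (fun _ => z1) (fun _ => z2).
    have := key i (-(1/2)) (fun _ => 0) (lexx _) p3 (fun _ => z1) (fun _ => z2).
    rewrite !s0 !oppr0 !addr0 ev => h1 h2.
    apply/eqP; rewrite eq_le -!(ler_int R); apply/andP; split; lra.
  have hb : forall j, (A i.+1).2 j = (A i).2 j.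
    move=> j.
    have hs1 : forall l, -(1/2) <= (if l == j then 1/2 else 0 : R) by move=> l; case: ifP.
    have hs2 : forall l, (if l == j then 1/2 else 0 : R) <= 1/2 by move=> l; case: ifP.
    have hs3 : forall l, -(1/2) <= (if l == j then -(1/2) else 0 : R) by move=> l; case: ifP.
    have hs4 : forall l, (if l == j then -(1/2) else 0 : R) <= 1/2 by move=> l; case: ifP.
    have := key i 0 _ z1 z2 hs1 hs2.
    have := key i 0 _ z1 z2 hs3 hs4.
    rewrite !sum_single !mul0r !addr0 ev => h1 h2.
    apply/eqP; rewrite eq_le -!(ler_int R); apply/andP; split; lra.
  move: ha hb; case: (A i.+1) => a1 b1; case: (A i) => a2 b2 /= -> hb.
  by congr (_, _); apply/ffunP => j; apply: hb.
exists N; elim=> [|i IH]; first by rewrite leqn0 => /eqP ->.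
rewrite leq_eqVlt => /orP [/eqP <- //| hi].
by rewrite step // IH.
Qed.
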